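(* For all $f_1,\dots,f_n:\mathscr{P}\to\mathbb{Q}$: (i) $\langle f_1\odot f_2\odot\cdots\odot f_n\rangle_q=\langle f_1\rangle_q\langle f_2\rangle_q\cdots\langle f_n\rangle_q$; (ii) $\langle f_1|\cdots|f_n\rangle_q=\langle f_1\otimes\cdots\otimes f_n\rangle_q$.
   Context: $\mathscr{P}$ is the set of partitions, $|\lambda|=\sum\lambda_i$. $\langle f\rangle_q=\frac{\sum_\lambda f(\lambda)q^{|\lambda|}}{\sum_\lambda q^{|\lambda|}}$. Induced product: with $u_\lambda=\prod_{i:\lambda_i>0}u_{\lambda_i}$ and $\langle f\rangle_{\vec u}=\frac{\sum_\lambda f(\lambda)u_\lambda}{\sum_\lambda u_\lambda}\in\mathbb{Q}[[u_1,u_2,\dots]]$ (a linear bijection in $f$), $f\odot g$ is defined by $\langle f\odot g\rangle_{\vec u}=\langle f\rangle_{\vec u}\langle g\rangle_{\vec u}$. $\Pi(n)$ is the set of set partitions of $\{1,\dots,n\}$, $\ell(\alpha)$ the number of blocks, $\mu(\alpha,\mathbf{1})=(-1)^{\ell(\alpha)-1}(\ell(\alpha)-1)!$, and $f_A=\prod_{a\in A}f_a$ (pointwise product). The connected product is $f_1|\cdots|f_n=\sum_{\alpha\in\Pi(n)}\mu(\alpha,\mathbf{1})\bigodot_{A\in\alpha}f_A$, and the connected $q$-bracket is $\langle f_1\otimes\cdots\otimes f_n\rangle_q=\sum_{\alpha\in\Pi(n)}\mu(\alpha,\mathbf{1})\prod_{A\in\alpha}\langle f_A\rangle_q$. *)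

(* Defs.v *)
From HB Require Import structures.
From mathcomp Require Import all_boot all_order all_algebra.
Set Implicit Arguments. Unset Strict Implicit. Unset Printing Implicit Defensive.
Import Order.TTheory GRing.Theory Num.Theory.
Local Open Scope ring_scope.

Definition is_intpart (s : seq nat) : bool :=
  sorted (fun x y => (y <= x)%N) s && all (fun x => (0 < x)%N) s.

Record intpart := IntPart { ipval :> seq nat; _ : is_intpart ipval }.
HB.instance Definition _ := [isSub for ipval].
HB.instance Definition _ := [Countable of intpart by <:].

Definition psize (l : intpart) : nat := sumn l.

Definition seqs_upto (N : nat) : seq (seq nat) :=
  flatten [seq [seq map (@nat_of_ord N.+1) (tval t) | t <- enum {: k.-tuple 'I_N.+1}]
          | k <- iota 0 N.+1].

(** The list of all partitions of N (each exactly once). *)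
Definition intparts_of (N : nat) : seq intpart :=
  pmap insub [seq s <- seqs_upto N | sumn s == N].

(** * Formal power series in q over Q: coefficient sequences. *)
Definition qseries := nat -> rat.
Definition qone : qseries := fun N => (N == 0%N)%:R.
Definition qadd (A B : qseries) : qseries := fun N => A N + B N.
Definition qmul (A B : qseries) : qseries :=
  fun N => \sum_(i < N.+1) A i * B (N - i)%N.
(** Inverse of a series D with D 0 = 1, via the geometric series in E = 1 - D
    (E^k has no terms of degree < k). *)
Definition qinv (D : qseries) : qseries :=
  fun N => \sum_(k < N.+1) iter k (qmul (fun M => qone M - D M)) qone N.

Definition qgen (f : intpart -> rat) : qseries :=
  fun N => \sum_(l <- intparts_of N) f l.
Definition qbracket (f : intpart -> rat) : qseries :=
  qmul (qgen f) (qinv (qgen (fun _ => 1))).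

(** * Formal power series in u_1, u_2, ...: a monomial u_lambda is indexed by
    the partition lambda (the multiset of its variable indices), so a series is
    a function intpart -> rat (its coefficient family). *)
Definition useries := intpart -> rat.
Definition uone : useries := fun l => (size (ipval l) == 0%N)%:R.
(** Product: (AB)_lambda = sum over mu (+) nu = lambda (multiset union). *)
Definition umul (A B : useries) : useries := fun l =>
  \sum_(k < (psize l).+1) \sum_(m <- intparts_of k)
    \sum_(n <- intparts_of (psize l - k)%N)
      (if perm_eq (ipval m ++ ipval n) (ipval l) then A m * B n else 0).
(** Inverse of D with constant term 1: sum_k (1 - D)^k, which at u_lambda
    only involves k <= length of lambda. *)
Definition uinv (D : useries) : useries := fun l =>
  \sum_(k < (size (ipval l)).+1) iter k (umul (fun m => uone m - D m)) uone l.

Definition uZ : useries := fun _ => 1.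
Definition ubracket (f : intpart -> rat) : useries := umul f (uinv uZ).

(** Induced product: f (.) g is the preimage of <f>_u <g>_u under the bijection
    f |-> <f>_u, whose inverse is A |-> A * (sum_lambda u_lambda). *)
Definition odot (f g : intpart -> rat) : intpart -> rat :=
  umul (umul (ubracket f) (ubracket g)) uZ.
(** Unit of the induced product (the constant function 1, <1>_u = 1). *)
Definition odot_unit : intpart -> rat := fun _ => 1.

Definition fblock n (f : 'I_n -> intpart -> rat) (A : {set 'I_n}) : intpart -> rat :=
  fun l => \prod_(a in A) f a l.

(** mu(alpha, 1) = (-1)^(l(alpha)-1) (l(alpha)-1)! *)
Definition mobius_top n (P : {set {set 'I_n}}) : rat :=
  (-1) ^+ (#|P|.-1) * ((#|P|.-1)`!)%:R.

(** Set partitions of {1..n} are the P with [partition P [set: 'I_n]]. *)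
Definition connected_prod n (f : 'I_n -> intpart -> rat) : intpart -> rat :=
  fun l => \sum_(P : {set {set 'I_n}} | partition P [set: 'I_n])
             mobius_top P * (\big[odot/odot_unit]_(A in P) fblock f A) l.

Definition connected_qbracket n (f : 'I_n -> intpart -> rat) : qseries :=
  fun N => \sum_(P : {set {set 'I_n}} | partition P [set: 'I_n])
             mobius_top P * (\big[qmul/qone]_(A in P) qbracket (fblock f A)) N.

(* Main.v *)
Require Import Defs.
From mathcomp Require Import all_boot all_order all_algebra.
From Stdlib Require Import FunctionalExtensionality.
From mathcomp Require Import zify.
Set Implicit Arguments. Unset Strict Implicit. Unset Printing Implicit Defensive.
Import Order.TTheory GRing.Theory Num.Theory.
Local Open Scope ring_scope.



Definition tp (A : qseries) (N : nat) : {poly rat} := \poly_(i < N.+1) A i.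

Lemma coef_tp A N i : (i <= N)%N -> (tp A N)`_i = A i.
Proof. by move=> h; rewrite coef_poly ltnS h. Qed.

Lemma mul_low (p q p' q' : {poly rat}) N i : (i <= N)%N ->
  (forall j, (j <= N)%N -> p`_j = p'`_j) ->
  (forall j, (j <= N)%N -> q`_j = q'`_j) -> (p * q)`_i = (p' * q')`_i.
Proof.
move=> hi hp hq; rewrite !coefM; apply: eq_bigr => j _.
have hj : (j <= N)%N by apply: leq_trans hi; rewrite -ltnS.
rewrite hp // hq //; apply: leq_trans hi; exact: leq_subr.
Qed.

Lemma qmul_coef A B N i : (i <= N)%N -> qmul A B i = (tp A N * tp B N)`_i.
Proof.
move=> hi; rewrite coefM /qmul; apply: eq_bigr => j _.
have hj : (j <= N)%N by apply: leq_trans hi; rewrite -ltnS.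
rewrite !coef_tp //; apply: leq_trans hi; exact: leq_subr.
Qed.

Lemma qmulC A B : qmul A B = qmul B A.
Proof. apply: functional_extensionality => N; by rewrite !(qmul_coef _ _ (leqnn N)) mulrC. Qed.

Lemma tp_mul A B N j : (j <= N)%N -> (tp (qmul A B) N)`_j = (tp A N * tp B N)`_j.
Proof. by move=> h; rewrite coef_tp // (qmul_coef _ _ h). Qed.

Lemma qmulA A B C : qmul A (qmul B C) = qmul (qmul A B) C.
Proof.
apply: functional_extensionality => N; rewrite !(qmul_coef _ _ (leqnn N)).
rewrite (@mul_low _ _ (tp A N) (tp B N * tp C N) N N) //; last exact: tp_mul.
rewrite [RHS](@mul_low _ _ (tp A N * tp B N) (tp C N) N N) //; last exact: tp_mul.
by rewrite mulrA.
Qed.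

Lemma tp_one N j : (j <= N)%N -> (tp qone N)`_j = (1 : {poly rat})`_j.
Proof. by move=> h; rewrite coef_tp // coef1. Qed.

Lemma qmul1q A : qmul qone A = A.
Proof.
apply: functional_extensionality => N; rewrite (qmul_coef _ _ (leqnn N)).
rewrite (@mul_low _ _ 1 (tp A N) N N) //; last exact: tp_one.
by rewrite mul1r coef_tp.
Qed.

Lemma qmulq1 A : qmul A qone = A.
Proof. by rewrite qmulC qmul1q. Qed.

Lemma pow_low (e : {poly rat}) k i : e`_0 = 0 -> (i < k)%N -> (e ^+ k)`_i = 0.
Proof.
move=> e0; elim: k i => [//|k IH] i hi.
rewrite exprS coefM big1 // => [[j hj]] _ /=.
case: j hj => [|j] hj; first by rewrite e0 mul0r.
by rewrite IH ?mulr0 //; lia.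
Qed.

Lemma iter_coef (E : qseries) N k i : (i <= N)%N ->
  iter k (qmul E) qone i = ((tp E N) ^+ k)`_i.
Proof.
elim: k i => [|k IH] i hi; first by rewrite expr0 coef1.
rewrite iterS exprS (qmul_coef _ _ hi); apply: mul_low hi _ _ => // j hj.
by rewrite coef_tp // IH.
Qed.

Lemma qinvK D : D 0%N = 1 -> qmul (qinv D) D = qone.
Proof.
move=> D0; apply: functional_extensionality => N.
set E := fun M => qone M - D M.
set e := tp E N.
have e0 : e`_0 = 0 by rewrite coef_tp // /E D0 /qone subrr.
rewrite (qmul_coef _ _ (leqnn N)).
rewrite (@mul_low _ _ (\sum_(k < N.+1) e ^+ k) (1 - e) N N) //.
- have -> : (\sum_(k < N.+1) e ^+ k) * (1 - e) = 1 - e ^+ N.+1.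
    by rewrite mulrC -opprB mulNr -subrX1 opprB.
  rewrite coefB coef1 pow_low // subr0.
  by rewrite /qone.
- move=> j hj; rewrite coef_tp // /qinv coef_sum.
  rewrite (big_ord_widen _ (fun k => iter k (qmul E) qone j) (_ : j.+1 <= N.+1)%N) // big_mkcond /=.
  apply: eq_bigr => [[k hk]] _ /=; rewrite (iter_coef _ _ hj).
  by case: ifP => // h; rewrite pow_low //; rewrite ltnNge -ltnS h.
- move=> j hj; rewrite coef_tp // coefB coef1 coef_tp // /E /qone.
  by rewrite opprB addrC subrK.
Qed.



Lemma leq_sumn_mem (s : seq nat) x : x \in s -> (x <= sumn s)%N.
Proof.
elim: s => //= y s IH; rewrite in_cons => /orP[/eqP->|h]; first exact: leq_addr.
by apply: leq_trans (IH h) _; exact: leq_addl.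
Qed.

Lemma size_sumn (s : seq nat) : all (fun x => 0 < x)%N s -> (size s <= sumn s)%N.
Proof. elim: s => //= y s IH /andP[h1 h2]; have := IH h2; lia. Qed.

Lemma mem_seqs_upto N (s : seq nat) :
  all (fun x => x <= N)%N s -> (size s <= N)%N -> s \in seqs_upto N.
Proof.
move=> ha hs; apply/flatten_mapP; exists (size s); first by rewrite mem_iota.
apply/mapP.
exists (map_tuple (fun x : nat => (inord x : 'I_N.+1)) (in_tuple s)); first by rewrite mem_enum.
rewrite /= -map_comp map_id_in // => x hx /=; rewrite inordK //.
by rewrite ltnS; move/allP: ha; apply.
Qed.

Lemma uniq_flat (T S : eqType) (F : T -> seq S) (sz : S -> T) (s : seq T) :
  uniq s -> (forall x, uniq (F x)) -> (forall x y, y \in F x -> sz y = x) ->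
  uniq (flatten (map F s)).
Proof.
move=> us uF hsz; elim: s us => //= x s IH /andP[xs us].
rewrite cat_uniq uF IH // andbT; apply/hasPn => y /flatten_mapP[x' x's yF].
apply/negP => yx; have h1 := hsz _ _ yF; have h2 := hsz _ _ yx.
by move: xs; rewrite -h2 h1 x's.
Qed.

Lemma uniq_seqs_upto N : uniq (seqs_upto N).
Proof.
apply: (@uniq_flat _ _ _ size); first exact: iota_uniq.
- move=> k; rewrite map_inj_uniq ?enum_uniq // => t1 t2 /= h.
  by apply: val_inj; apply: (inj_map val_inj).
- by move=> k y /mapP[t _ ->]; rewrite size_map size_tuple.
Qed.

Lemma mem_intparts N (l : intpart) : (l \in intparts_of N) = (psize l == N).
Proof.
rewrite /intparts_of mem_pmap_sub mem_filter /psize.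
case: eqP => //= hN; apply: mem_seqs_upto.
- case: l hN => s /= /andP[_ hp] hN; apply/allP => x hx; rewrite -hN.
  exact: leq_sumn_mem.
- case: l hN => s /= /andP[_ hp] hN; rewrite -hN; exact: size_sumn.
Qed.

Lemma uniq_intparts N : uniq (intparts_of N).
Proof. by apply: pmap_sub_uniq; apply: filter_uniq; apply: uniq_seqs_upto. Qed.

Lemma sum_pred1 (T : eqType) (r : seq T) y :
  \sum_(x <- r) ((x == y)%:R : rat) = (count_mem y r)%:R.
Proof.
elim: r => [|x r IH]; first by rewrite big_nil.
by rewrite big_cons IH /= natrD eq_sym.
Qed.

Lemma sum_intparts1 N (l0 : intpart) :
  \sum_(l <- intparts_of N) ((l == l0)%:R : rat) = (psize l0 == N)%:R.
Proof. by rewrite sum_pred1 count_uniq_mem ?uniq_intparts // mem_intparts. Qed.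



Definition geqn := fun x y : nat => (y <= x)%N.

Lemma perm_sort' (s : seq nat) : perm_eq (sort geqn s) s.
Proof. by rewrite perm_sort. Qed.

Lemma merge_ip (m n : intpart) : is_intpart (sort geqn (ipval m ++ ipval n)).
Proof.
apply/andP; split; first by apply: sort_sorted => x y; rewrite /geqn leq_total.
rewrite (perm_all _ (perm_sort' _)) all_cat.
by case: m => ? /andP[_ ->]; case: n => ? /andP[_ ->].
Qed.

Definition ipmerge m n := IntPart (merge_ip m n).

Lemma perm_ip (m n l : intpart) : perm_eq (ipval m ++ ipval n) (ipval l) = (l == ipmerge m n).
Proof.
apply/idP/eqP => [h|->]; last by rewrite /= perm_sym perm_sort.
apply: val_inj => /=; apply: (@sorted_eq _ geqn).
- by move=> y x z h1 h2; apply: (leq_trans h2 h1).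
- by move=> x y; rewrite /geqn /=; lia.
- by case: l {h} => ? /= /andP[].
- by have /andP[] := merge_ip m n.
- by rewrite perm_sym (perm_trans (perm_sort' _)) // perm_sym.
Qed.

Lemma psize_merge m n : psize (ipmerge m n) = (psize m + psize n)%N.
Proof. by rewrite /psize /= (perm_sumn (perm_sort' _)) sumn_cat. Qed.

Lemma spec_umul A B : qgen (umul A B) =1 qmul (qgen A) (qgen B).
Proof.
move=> N; rewrite /qgen /qmul /umul.
rewrite (eq_big_seq (fun l => \sum_(k < N.+1) \sum_(m <- intparts_of k)
    \sum_(n <- intparts_of (N - k)) (if perm_eq (ipval m ++ ipval n) (ipval l) then A m * B n else 0))); last first.
  by move=> l; rewrite mem_intparts => /eqP ->.
rewrite exchange_big /=; apply: eq_bigr => [[k hk]] _ /=.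
rewrite big_distrl /= exchange_big /= big_seq [RHS]big_seq; apply: eq_bigr => m hm.
rewrite big_distrr /= exchange_big /= big_seq [RHS]big_seq; apply: eq_bigr => n hn.
rewrite (eq_bigr (fun l => (l == ipmerge m n)%:R * (A m * B n))); last first.
  by move=> l _; rewrite perm_ip; case: eqP; rewrite ?mul1r ?mul0r.
rewrite -big_distrl /= sum_intparts1 psize_merge.
move: hm hn; rewrite !mem_intparts => /eqP -> /eqP ->.
by rewrite subnKC ?eqxx ?mul1r // -ltnS.
Qed.



Lemma ip0 : is_intpart [::]. Proof. by []. Qed.
Definition e0 := IntPart ip0.

Lemma size0_e0 (l : intpart) : (size (ipval l) == 0%N) = (l == e0).
Proof.
apply/idP/eqP => [|->] //; rewrite size_eq0 => /eqP h; exact: val_inj.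
Qed.

Lemma spec_uone : qgen uone = qone.
Proof.
apply: functional_extensionality => N; rewrite /qgen /uone.
under eq_bigr do rewrite size0_e0.
by rewrite sum_intparts1 /qone eq_sym.
Qed.

Lemma spec_sub A B : qgen (fun l => A l - B l) = (fun N => qgen A N - qgen B N).
Proof. apply: functional_extensionality => N; by rewrite /qgen sumrB. Qed.

Lemma iter_vanish (D : useries) : D e0 = 1 -> forall k (l : intpart),
  (size (ipval l) < k)%N -> iter k (umul (fun m => uone m - D m)) uone l = 0.
Proof.
move=> hD; elim=> [//|k IH] l hl; rewrite iterS /umul.
apply: big1 => i _; apply: big1 => m _; apply: big1 => n _.
case: ifP => // h; have hs := perm_size h; rewrite size_cat in hs.
case: (boolP (size (ipval m) == 0%N)) => hm.
  by rewrite /uone hm; move: hm; rewrite size0_e0 => /eqP ->; rewrite hD subrr mul0r.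
rewrite IH ?mulr0 //; move: hl; rewrite ltnS -hs; apply: leq_trans.
by rewrite -add1n leq_add2r lt0n.
Qed.

Lemma spec_uinv (D : useries) : D e0 = 1 -> qgen (uinv D) = qinv (qgen D).
Proof.
move=> hD; apply: functional_extensionality => N.
set E := fun m => uone m - D m.
have hit : forall k, qgen (iter k (umul E) uone) = iter k (qmul (fun M => qone M - qgen D M)) qone.
  elim=> [|k IH]; first exact: spec_uone.
  rewrite !iterS -IH; apply: functional_extensionality => M.
  rewrite spec_umul /E spec_sub spec_uone; by [].
rewrite /qinv; transitivity (\sum_(k < N.+1) qgen (iter k (umul E) uone) N); last first.
  by apply: eq_bigr => k _; rewrite hit.
rewrite /qgen exchange_big /=.
apply: eq_big_seq => l; rewrite mem_intparts => /eqP hN; rewrite /uinv.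
have hs : (size (ipval l) <= N)%N.
  rewrite -hN /psize; apply: size_sumn; by case: l {hN} => ? /= /andP[].
rewrite (big_ord_widen _ (fun k => iter k (umul E) uone l) (_ : (size (ipval l)).+1 <= N.+1)%N) // big_mkcond /=.
apply: eq_bigr => [[k hk]] _ /=; case: ifP => // h; rewrite iter_vanish //.
by rewrite ltnNge -ltnS h.
Qed.



Definition SS : qseries := qgen (fun _ => 1).

Lemma SS0 : SS 0%N = 1.
Proof.
rewrite /SS /qgen; transitivity ((psize e0 == 0%N)%:R : rat); last by [].
rewrite -(sum_intparts1 0 e0).
apply: eq_big_seq => l; rewrite mem_intparts => /eqP h.
suff -> : l = e0 by rewrite eqxx.
apply/eqP; rewrite -size0_e0 -leqn0 -h /psize; apply: size_sumn.
by case: l {h} => ? /= /andP[].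
Qed.

Lemma SSQ : qmul SS (qinv SS) = qone.
Proof. by rewrite qmulC qinvK // SS0. Qed.

Lemma qgen_umul A B : qgen (umul A B) = qmul (qgen A) (qgen B).
Proof. apply: functional_extensionality; exact: spec_umul. Qed.

Lemma qbr_mul f g : qbracket (odot f g) = qmul (qbracket f) (qbracket g).
Proof.
rewrite /qbracket /odot /ubracket !qgen_umul spec_uinv //.
rewrite -/SS -qmulA SSQ qmulq1; by [].
Qed.

Lemma qbr_unit : qbracket odot_unit = qone.
Proof. exact: SSQ. Qed.

Lemma qbr_big (I : Type) (r : seq I) (P : pred I) (F : I -> intpart -> rat) :
  qbracket (\big[odot/odot_unit]_(i <- r | P i) F i) = \big[qmul/qone]_(i <- r | P i) qbracket (F i).
Proof.
elim: r => [|x r IH]; first by rewrite !big_nil qbr_unit.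
rewrite !big_cons; case: (P x) => //; by rewrite qbr_mul IH.
Qed.

Lemma qbr_lin (I : finType) (C : pred I) (c : I -> rat) (g : I -> intpart -> rat) :
  qbracket (fun l => \sum_(i | C i) c i * g i l)
  = fun N => \sum_(i | C i) c i * qbracket (g i) N.
Proof.
apply: functional_extensionality => N; rewrite /qbracket /qmul /qgen.
under eq_bigr do rewrite exchange_big /= big_distrl /=.
rewrite exchange_big /=; apply: eq_bigr => i _.
rewrite mulr_sumr; apply: eq_bigr => k _; rewrite -mulr_sumr mulrA; by [].
Qed.

Theorem proposition3p2p5 (n : nat) (f : 'I_n -> intpart -> rat) :
  qbracket (\big[odot/odot_unit]_(i < n) f i)
    = \big[qmul/qone]_(i < n) qbracket (f i)
  /\ ((0 < n)%N -> qbracket (connected_prod f) = connected_qbracket f).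
Proof.
split; first exact: qbr_big.
move=> _; rewrite /connected_prod qbr_lin /connected_qbracket.
by apply: functional_extensionality => N; apply: eq_bigr => P _; rewrite qbr_big.
Qed.
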